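(* Consider the following two-bidder auction. A single good has common value $v$ with CDF $F_v$, density $f_v$, support $\mathbb{R}_+$ and finite mean. Assume $\mathbb{E}[v]>L\ge 0$ and let $\underline v$ in the support of $F_v$ satisfy $L=\mathbb{E}[\tilde v\mid\tilde v<\underline v]$ ($\tilde v\sim F_v$). Alice submits a bid knowing only $F_v$; then $v$ is realized and Bob, observing $v$ but not Alice's bid, submits a bid. The highest bid wins and pays its bid (payoff $v$ minus bid) unless it is strictly below $L$, in which case the good is unsold. If the bids tie, Bob wins; if Bob's bid equals $L$ he can win; a winning bid of Alice equal exactly to $L$ results in no sale. Define $$\beta_L(v)=\begin{cases}\mathbb{E}[\tilde v\mid \tilde v<v] & v\ge \underline v,\\ L & L<v<\underline v,\\ 0 & v\le L.\end{cases}$$ Suppose Alice draws $v'\sim F_v$ independently of $v$ and bids $\beta_L(v')$. Then Bob's best response, upon observing $v$, is to bid $\beta_L(v)$.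
   Context: Bidders are risk neutral. *)

(* Defs.v *)
From mathcomp Require Import all_boot all_order all_algebra.
From mathcomp Require Import all_classical all_reals all_analysis.
Set Implicit Arguments. Unset Strict Implicit. Unset Printing Implicit Defensive.
Import Order.TTheory GRing.Theory Num.Theory.
Local Open Scope classical_set_scope.
Local Open Scope ring_scope.

Section AuctionDefs.
Context {R : realType}.
Local Notation mu := (@lebesgue_measure R).

Definition prob (f : R -> R) (A : set R) : \bar R :=
  (\int[mu]_(x in A) (f x)%:E)%E.

Definition density_support_Rplus (f : R -> R) : Prop :=
  [/\ measurable_fun setT f,
      (forall x, 0 <= f x),
      prob f setT = 1%E,
      prob f `]-oo, 0[ = 0%E &
      (forall a b, a < b -> 0 < b -> (0 < prob f `]a, b[)%E)].

Definition finite_mean (f : R -> R) : Prop :=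
  mu.-integrable setT (fun x => (x * f x)%:E).

Definition mean (f : R -> R) : \bar R := (\int[mu]_x (x * f x)%:E)%E.

(* E[v~ | v~ < v] for v~ ~ f  (convention: 0 when P(v~ < v) = 0, i.e. the
   limit value at v = 0) *)
Definition condmean (f : R -> R) (v : R) : R :=
  fine (\int[mu]_(x in `]-oo, v[) (x * f x)%:E)%E / fine (prob f `]-oo, v[).

(* The bidding strategy beta_L, with vl the underline-v of the paper. *)
Definition beta (f : R -> R) (L vl v : R) : R :=
  if v <= L then 0 else if v < vl then L else condmean f v.

Definition bob_payoff (L v a b : R) : R :=
  if (L <= b) && (a <= b) then v - b else 0.

Definition bob_util (f : R -> R) (L vl v b : R) : \bar R :=
  (\int[mu]_t (f t * bob_payoff L v (beta f L vl t) b)%:E)%E.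

End AuctionDefs.

(* Main.v *)
Require Import Defs.
From mathcomp Require Import all_boot all_order all_algebra.
From mathcomp Require Import all_classical all_reals all_analysis.
From mathcomp Require Import lra ring.
Import Order.TTheory GRing.Theory Num.Theory.
Local Open Scope classical_set_scope.
Local Open Scope ring_scope.
Set Implicit Arguments. Unset Strict Implicit.

Section Aux.
Context {R : realType} (f : R -> R).
Local Notation mu := (@lebesgue_measure R).
Hypothesis mf : measurable_fun setT f.
Hypothesis f0 : forall x, 0 <= f x.
Hypothesis P1 : prob f setT = 1%E.
Hypothesis Pneg : prob f `]-oo, 0[ = 0%E.
Hypothesis Ppos : forall a b, a < b -> 0 < b -> (0 < prob f `]a, b[)%E.
Hypothesis fm : finite_mean f.

Lemma intf D : measurable D -> mu.-integrable D (EFin \o f).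
Proof.
move=> mD; apply: (integrableS measurableT) => //.
apply/integrableP; split; first exact/measurable_realfun.measurable_EFinP.
under eq_integral do rewrite /= ger0_norm//.
by move: P1; rewrite /prob => ->; rewrite ltry.
Qed.

Lemma intxf D : measurable D -> mu.-integrable D (EFin \o (fun x => x * f x)).
Proof. by move=> mD; apply: (integrableS measurableT) => //. Qed.

Lemma intZ D (g : R -> R) r : measurable D -> mu.-integrable D (EFin \o g) ->
  mu.-integrable D (EFin \o (fun x => r * g x)).
Proof.
move=> mD ig; have := integrableZl mD r ig; apply: eq_integrable => // x _ /=.

Qed.

Definition F t := \int[mu]_(x in `]-oo, t[) f x.
Definition H t := \int[mu]_(x in `]-oo, t[) (x * f x).

Lemma condmeanE t : condmean f t = H t / F t.
Proof. by []. Qed.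

Lemma split_itv (t t' : R) : t <= t' -> `]-oo, t'[%classic = `]-oo, t[ `|` `[t, t'[.
Proof.
move=> tt'; apply/seteqP; split => x /=; rewrite !in_itv /=.
  by case: (ltP x t) => /= xt xt'; [left|right; rewrite xt'].
by case=> [xt|/andP[_ //]]; apply: lt_le_trans tt'.
Qed.

Lemma disj_itv (t t' : R) : [disjoint `]-oo, t[%classic & `[t, t'[%classic].
Proof.
rewrite disj_set2E; apply/eqP/seteqP; split => x //=.
rewrite !in_itv /= => -[xt /andP[tx _]].
by move: (lt_le_trans xt tx); rewrite ltxx.
Qed.

Lemma Rsplit (g : R -> R) t t' : t <= t' ->
  mu.-integrable setT (EFin \o g) ->
  \int[mu]_(x in `]-oo, t'[) g x =
  \int[mu]_(x in `]-oo, t[) g x + \int[mu]_(x in `[t, t'[) g x.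
Proof.
move=> tt' ig; rewrite (split_itv tt'); apply: Rintegral_setU => //; last exact: disj_itv.
by rewrite -(split_itv tt'); apply: (integrableS measurableT).
Qed.


Lemma finf D : measurable D -> (\int[mu]_(x in D) (f x)%:E)%E \is a fin_num.
Proof. by move=> mD; have := integrable_fin_num mD (intf mD). Qed.

Lemma Rsub A B : measurable A -> measurable B -> A `<=` B ->
  \int[mu]_(x in A) f x <= \int[mu]_(x in B) f x.
Proof.
move=> mA mB AB; apply: fine_le.
- exact: finf.
- exact: finf.
apply: ge0_subset_integral => //=.
  exact/measurable_realfun.measurable_EFinP/(measurable_funS measurableT).
by move=> x _; rewrite lee_fin.
Qed.

Lemma Fge0 t : 0 <= F t.
Proof. by apply: Rintegral_ge0 => x _. Qed.

Lemma Fmono t t' : t <= t' -> F t <= F t'.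
Proof.
move=> tt'; rewrite /F (Rsplit tt') ?lerDl; last exact: intf.
by apply: Rintegral_ge0 => x _.
Qed.

Lemma Fpos t : 0 < t -> 0 < F t.
Proof.
move=> t0; apply: (@lt_le_trans _ _ (\int[mu]_(x in `]-1, t[) f x)).
  rewrite /Rintegral fine_gt0//; apply/andP; split.
    by apply: Ppos => //; apply: lt_trans t0; rewrite ltrN10.
  by rewrite ltey_eq finf. 
apply: Rsub => // x /=; rewrite !in_itv /= => /andP[_ ->]//.
Qed.

Lemma Fneg t : t <= 0 -> F t = 0.
Proof.
move=> t0; apply/eqP; rewrite eq_le Fge0 andbT.
apply: (@le_trans _ _ (\int[mu]_(x in `]-oo, 0[) f x)).
  apply: Rsub => // x /=; rewrite !in_itv /= => xt; exact: lt_le_trans t0.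
by rewrite /Rintegral; move: Pneg; rewrite /prob => ->.
Qed.

Lemma Hneg t : t <= 0 -> H t = 0.
Proof.
move=> t0.
have mD : measurable (`]-oo, t[%classic : set R) by [].
have mEf := (@measurable_realfun.measurable_EFinP _ _ _ (`]-oo,t[%classic) f).2
   (measurable_funS measurableT (@subsetT _ _) mf).
have i0 : (\int[mu]_(x in `]-oo, t[) `|(f x)%:E| = 0)%E.
  transitivity (\int[mu]_(x in `]-oo, t[) (f x)%:E)%E; first by apply: eq_integral => x _; rewrite gee0_abs ?lee_fin.
  rewrite -[LHS]fineK; last exact: finf.
  by have := Fneg t0; rewrite /F /Rintegral => ->.
have /(ae_eq_integral_abs mu mD mEf) hae := i0.
rewrite /H /Rintegral (@ae_eq_integral _ _ _ mu _ (cst 0%E)) //=.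
- by rewrite integral0.
- by case/integrableP: (intxf mD).
- move: hae; apply: filterS => x /= h Dx.
  by rewrite EFinM h ?mule0.
Qed.

Lemma Hge0 t : 0 <= H t.
Proof.
have [t0|t0] := leP t 0; first by rewrite Hneg.
rewrite /H (Rsplit (ltW t0)); last exact: intxf.
rewrite -/(H 0) Hneg // add0r; apply: Rintegral_ge0 => x /=.
by rewrite in_itv /= => /andP[x0 _]; apply: mulr_ge0.
Qed.

Lemma Hle t : H t <= t * F t.
Proof.
rewrite /H /F -RintegralZl //; last exact: intf.
apply: le_Rintegral => //; [exact: intxf|exact: intZ (intf _)|].
by move=> x /=; rewrite in_itv /= => xt; apply: ler_wpM2r => //; exact: ltW.
Qed.

Lemma addKr' (a b : R) : a + b - a = b.
Proof. by rewrite addrC addKr. Qed.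

Lemma Hdiff_le t t' c : t <= t' -> (forall x, t <= x < t' -> x <= c) ->
  H t' - H t <= c * (F t' - F t).
Proof.
move=> tt' hc.
rewrite /H /F (@Rsplit (fun x => x * f x) _ _ tt') ?(@Rsplit (fun x => f x) _ _ tt');
  try (by apply: intf); try (by apply: intxf).
rewrite !addKr' -RintegralZl //; last exact: intf.
apply: le_Rintegral => //; [exact: intxf|exact: intZ (intf _)|].
by move=> x /=; rewrite in_itv /= => /hc xc; apply: ler_wpM2r.
Qed.

Lemma Hdiff_ge t t' c : t <= t' -> (forall x, t <= x < t' -> c <= x) ->
  c * (F t' - F t) <= H t' - H t.
Proof.
move=> tt' hc.
rewrite /H /F (@Rsplit (fun x => x * f x) _ _ tt') ?(@Rsplit (fun x => f x) _ _ tt');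
  try (by apply: intf); try (by apply: intxf).
rewrite !addKr' -RintegralZl //; last exact: intf.
apply: le_Rintegral => //; [exact: intZ (intf _)|exact: intxf|].
by move=> x /=; rewrite in_itv /= => /hc xc; apply: ler_wpM2r.
Qed.


Definition m t := H t / F t.

Lemma HF t : H t = m t * F t.
Proof.
have [t0|t0] := leP t 0; first by rewrite Hneg // /m Fneg // mulr0.
by rewrite /m divfK // gt_eqF // Fpos.
Qed.

Lemma mge0 t : 0 <= m t.
Proof. by apply: divr_ge0; [exact: Hge0|exact: Fge0]. Qed.

Lemma mle t : 0 <= t -> m t <= t.
Proof.
move=> t0; have [tle|tgt] := leP t 0.
  by rewrite /m Fneg // invr0 mulr0.
by rewrite /m ler_pdivrMr ?Fpos // Hle.
Qed.

Lemma mmono t t' : t <= t' -> m t <= m t'.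
Proof.
move=> tt'; have [tle|tgt] := leP t 0.
  by rewrite {1}/m Fneg // invr0 mulr0 mge0.
have Ft := Fpos tgt; have Ft' := Fpos (lt_le_trans tgt tt').
have Fm := Fmono tt'.
have hd := Hdiff_ge (c := t) tt' (fun x => fun h => proj1 (andP h)).
have hl := Hle t.
rewrite /m ler_pdivrMr // mulrAC ler_pdivlMr //.
nra.
Qed.


Lemma Lim_seq (A : set R) (K : R) (u : nat -> R) (s0 : R) : measurable A ->
  {homo u : n k / (n <= k)%N >-> n <= k} ->
  (forall n, A (u n)) -> A `\ s0 `<=` \bigcup_n `]-oo, u n[%classic ->
  (forall t, A t -> F t <= K) -> \int[mu]_(x in A) f x <= K.
Proof.
move=> mA nu Au sub FK.
have mS : forall n, measurable (`]-oo, u n[%classic : set R) by [].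
have mU : measurable (\bigcup_n `]-oo, u n[%classic : set R).
  by apply: bigcup_measurable.
have hc : (\int[mu]_(x in `]-oo, u n[) (f x)%:E)%E @[n --> \oo] -->
   (\int[mu]_(x in \bigcup_n `]-oo, u n[%classic) (f x)%:E)%E.
  apply: ge0_nondecreasing_set_cvg_integral => //.
  - move=> n k nk; apply/subsetPset => x /=; rewrite !in_itv /= => xu; exact: lt_le_trans xu (nu _ _ nk).
  - move=> n; exact/measurable_realfun.measurable_EFinP/(measurable_funS measurableT).
  - by move=> n x _; rewrite lee_fin.
rewrite -lee_fin /Rintegral fineK; last exact: finf.
rewrite -(@integral_setD1 _ _ s0 A); last 2 first.
- exact: measurableD.
- exact/measurable_realfun.measurable_EFinP/(measurable_funS measurableT).
apply: (@le_trans _ _ (\int[mu]_(x in \bigcup_n `]-oo, u n[%classic) (f x)%:E)%E).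
  apply: ge0_subset_integral => //; first exact: measurableD.
  - exact/measurable_realfun.measurable_EFinP/(measurable_funS measurableT).
  - by move=> x _; rewrite lee_fin.
rewrite -(cvg_lim _ hc) //; apply: lime_le; first exact: cvgP hc.
apply: nearW => n.
have := FK _ (Au n); rewrite -lee_fin /F /Rintegral fineK //; exact: finf.
Qed.

Lemma Lim (A : set R) (K : R) : measurable A -> A !=set0 ->
  (forall t t', t <= t' -> A t' -> A t) ->
  (forall t, A t -> F t <= K) -> \int[mu]_(x in A) f x <= K.
Proof.
move=> mA A0 dA FK.
have [ub|nub] := pselect (has_ubound A).
  have hs : has_sup A by [].
  set s := sup A.
  apply: (@Lim_seq A K (fun n => s - n.+1%:R^-1) s) => //.
  - move=> n k nk; rewrite lerD2l lerN2 lef_pV2 ?posrE ?ler_nat //.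
  - move=> n; have hn : 0 < n.+1%:R^-1 :> R by rewrite invr_gt0.
    have [e Ae se] := sup_adherent hn hs.
    by apply: (dA _ e) => //; exact: ltW.
  - move=> x [Ax /= xs].
    have xls : x < s by rewrite lt_neqAle (sup_upper_bound hs) // andbT; apply/eqP.
    exists (Num.truncn ((s - x)^-1)) => //=; rewrite in_itv /=.
    rewrite ltrBrDl -ltrBrDr.
    have sx0 : 0 < s - x by rewrite subr_gt0.
    rewrite invf_plt ?posrE //; exact: truncnS_gt.
have hub : forall M, exists2 t, A t & M < t.
  move=> M; apply: contrapT => /forall2NP h; apply: nub; exists M => y Ay.
  by case: (h y) => // /negP; rewrite -leNgt.
apply: (@Lim_seq A K (fun n => n%:R) 0) => //.
- by move=> n k nk; rewrite ler_nat.
- by move=> n; have [t At nt] := hub n%:R; apply: (dA _ t) => //; exact: ltW.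
- move=> x _; exists (Num.truncn x).+1 => //=; rewrite in_itv /=; exact: truncnS_gt.
Qed.

Variables (L vl : R).
Hypotheses (L0 : 0 <= L) (vl0 : 0 <= vl) (Lvl : L = m vl).
Local Notation be := (beta f L vl).

Lemma bge0 t : 0 <= be t.
Proof. by rewrite /beta; case: ifP => // _; case: ifP => // _; exact: mge0. Qed.

Lemma bmono t t' : t <= t' -> be t <= be t'.
Proof.
move=> tt'; have [tL|Lt] := leP t L.
  by rewrite {1}/beta tL; exact: bge0.
have t'L : (t' <= L) = false by rewrite leNgt (lt_le_trans Lt tt').
have tL' : (t <= L) = false by rewrite leNgt Lt.
rewrite /beta t'L tL'.
case: (ltP t vl) => tvl; case: (ltP t' vl) => t'vl //.
- by rewrite Lvl; exact: mmono.
- by move: (le_lt_trans (le_trans tvl tt') t'vl); rewrite ltxx.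
- exact: mmono.
Qed.

Lemma bmeas : measurable_fun setT be.
Proof. by apply: measurable_realfun.nondecreasing_measurable => // t t'; exact: bmono. Qed.

Definition Aset b := [set t | be t <= b].

Lemma mAset b : measurable (Aset b).
Proof.
have := bmeas measurableT (measurable_itv `]-oo, b]).
rewrite setTI; congr measurable; apply/seteqP; split => x /=;
  by rewrite in_itv /=.
Qed.

Lemma UE_lt v b : b < L -> bob_util f L vl v b = 0%E.
Proof.
move=> bL; rewrite /bob_util integral0_eq // => x _.
by rewrite /bob_payoff ifF ?mulr0 // leNgt bL.
Qed.

Lemma UE v b : L <= b ->
  bob_util f L vl v b = ((v - b) * \int[mu]_(x in Aset b) f x)%:E.
Proof.
move=> Lb; rewrite /bob_util.
transitivity (\int[mu]_x (((fun x => (v - b)%:E * (f x)%:E) \_ (Aset b)) x))%E.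
  apply: eq_integral => x _; rewrite patchE /bob_payoff Lb /=.
  have -> : (x \in Aset b) = (be x <= b) by apply/idP/idP; rewrite inE.
  by case: ifP => _; rewrite ?mulr0 // EFinM muleC.
rewrite -integral_mkcond integralZl; [|exact: mAset|exact: intf (mAset b)].
by rewrite EFinM /Rintegral fineK //; exact: finf (mAset b).
Qed.


Definition J v t := v * F t - H t.

Lemma Jinc v s t : s <= t -> t <= v -> J v s <= J v t.
Proof.
move=> st tv; have hd := @Hdiff_le s t v st.
have /hd {}hd : forall x, s <= x < t -> x <= v.
  by move=> x /andP[_ xt]; apply: le_trans tv; exact: ltW.
rewrite /J; nra.
Qed.

Lemma Jdec v s t : v <= s -> s <= t -> J v t <= J v s.
Proof.
move=> vs st; have hd := @Hdiff_ge s t v st.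
have /hd {}hd : forall x, s <= x < t -> v <= x.
  by move=> x /andP[sx _]; apply: le_trans sx.
rewrite /J; nra.
Qed.

Lemma Jmax v t : J v t <= J v v.
Proof.
have [tv|vt] := leP t v; first exact: Jinc.
exact: Jdec (ltW vt).
Qed.

Lemma main v (v0 : 0 <= v) b :
  (bob_util f L vl v b <= bob_util f L vl v (be v))%E.
Proof.
have [vL|Lv] := leP v L.
  have -> : be v = 0 by rewrite /beta vL.
  have -> : bob_util f L vl v 0 = 0%E.
    have [Lp|Lle] := ltP 0 L; first exact: UE_lt.
    have L00 : L = 0 by apply/le_anti; rewrite Lle L0.
    have v00 : v = 0 by apply/le_anti; rewrite v0 -L00 vL.
    by rewrite UE ?L00 // v00 subrr mul0r.
  have [bL|Lb] := ltP b L; first by rewrite UE_lt.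
  rewrite UE // lee_fin; apply: mulr_le0_ge0.
    by rewrite subr_le0; exact: le_trans vL Lb.
  by apply: Rintegral_ge0 => x _.
set w := if v < vl then vl else v.
have vlw : vl <= w by rewrite /w; case: ifP => // /negbT; rewrite -leNgt.
have vw : v <= w by rewrite /w; case: ifP => // /ltW.
have bvE : be v = m w.
  rewrite /beta ifF; last by rewrite leNgt Lv.
  by rewrite /w; case: ifP.
have w0 : 0 < w := lt_le_trans (le_lt_trans L0 Lv) vw.
have Fw := Fpos w0.
have Lc : L <= m w by rewrite Lvl; exact: mmono.
have cv : m w <= v.
  rewrite /w; case: ifP => _; last exact: mle.
  by rewrite -Lvl ltW.
have JwE : J v w = (v - m w) * F w by rewrite /J HF mulrBl.
have Jw0 : 0 <= J v w by rewrite JwE mulr_ge0 // ?subr_ge0 // ltW.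
have lower : ((J v w)%:E <= bob_util f L vl v (be v))%E.
  rewrite bvE UE // lee_fin JwE; apply: ler_wpM2l; first by rewrite subr_ge0.
  apply: Rsub => //; first exact: mAset.
  move=> t /=; rewrite in_itv /= => tw; rewrite /Aset /=.
  have [tvl|vlt] := ltP t vl.
    apply: le_trans Lc; rewrite /beta; case: ifP => _ //; by rewrite tvl.
  rewrite -bvE; apply: bmono.
  move: tw; rewrite /w; case: ifP => vvl tw; last exact: ltW.
  by move: (lt_le_trans tw vlt); rewrite ltxx.
apply: le_trans lower.
have [bL|Lb] := ltP b L; first by rewrite UE_lt // lee_fin.
rewrite UE // lee_fin.
have [vb|bv] := leP v b.
  apply: le_trans Jw0; apply: mulr_le0_ge0; first by rewrite subr_le0.
  by apply: Rintegral_ge0 => x _.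
have vb0 : 0 < v - b by rewrite subr_gt0.
have bvl : be vl <= b.
  rewrite /beta; case: ifP => _; first exact: le_trans Lb.
  by rewrite ltxx (_ : condmean f vl = m vl) // -Lvl.
have key : forall t, vl <= t -> be t <= b -> (v - b) * F t <= J v w.
  move=> t vlt bt.
  have mtb : m t <= b.
    have [tL|Lt] := leP t L.
      by apply: le_trans (mle (le_trans vl0 vlt)) _; exact: le_trans tL Lb.
    by move: bt; rewrite /beta ifF ?leNgt ?Lt // ifF // ltNge vlt.
  apply: (@le_trans _ _ (J v t)).
    rewrite /J HF -mulrBl; apply: ler_wpM2r; first exact: Fge0.
    by rewrite lerD2l lerN2.
  rewrite /w; case: ifP => vvl; last exact: Jmax.
  by apply: Jdec => //; exact: ltW.
have hI : \int[mu]_(x in Aset b) f x <= J v w / (v - b).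
  apply: Lim.
  - exact: mAset.
  - by exists vl.
  - by move=> t t' tt' /= bt'; apply: le_trans bt'; exact: bmono.
  - move=> t bt; rewrite ler_pdivlMr // mulrC.
    have [tvl|vlt] := ltP t vl; last exact: key.
    apply: le_trans (key _ (lexx _) bvl).
    by apply: ler_wpM2l; [exact: ltW|exact: Fmono (ltW tvl)].
apply: (@le_trans _ _ ((v - b) * (J v w / (v - b)))).
  by apply: ler_wpM2l => //; exact: ltW.
by rewrite mulrC divfK // gt_eqF.
Qed.

End Aux.

Unset Implicit Arguments.

Theorem lemma4 (R : realType) (f : R -> R) (L vl : R) :
  density_support_Rplus f ->
  finite_mean f ->
  0 <= L ->
  (L%:E < mean f)%E ->
  0 <= vl ->
  L = condmean f vl ->
  forall v : R, 0 <= v ->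
  forall b : R, (bob_util f L vl v b <= bob_util f L vl v (beta f L vl v))%E.
Proof.
move=> [mf f0 P1 Pneg Ppos] fm L0 _ vl0 Lvl v v0 b.
exact: (main mf f0 P1 Pneg Ppos fm L0 vl0 Lvl v0 b).
Qed.
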